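(* Fix $n\ge 1$, $\Gamma\ge 1$, a score function $\varphi:(0,1)\to[0,\infty)$, and any threshold function $f:(0,1)\to\mathbb{R}_{>0}$. Consider all joint distributions of the treatment assignments allowed by the sensitivity null hypothesis $H_0(\Gamma)$. Among these, the conditional rejection probability $$\mathbb{P}\big(\exists x\in(0,1): T_n(x)\ge f(x)\,\big|\,\mathcal{F}\big)$$ is maximized by the distribution under which the signs are conditionally independent across pairs and $\mathbb{P}(Y_i>0\mid\mathcal{F})=\Gamma/(1+\Gamma)$ for every $i\in\{1,\dots,n\}$.
   Context: Paired observational study: there are $n$ pairs; in pair $i$, units $j=1,2$ have control potential outcome $R_{Cij}$, treated potential outcome $R_{Tij}$ and treatment indicator $Z_{ij}\in\{0,1\}$. Throughout, everything is conditional on the event that exactly one unit per pair is treated ($Z_{i1}+Z_{i2}=1$ for all $i$). $\mathcal{F}$ is the $\sigma$-field generated by all potential outcomes. Observed outcomes are $R^{obs}_{ij}=Z_{ij}R_{Tij}+(1-Z_{ij})R_{Cij}$, and $Y_i=(Z_{i1}-Z_{i2})(R^{obs}_{i1}-R^{obs}_{i2})$ is the treated-minus-control difference. Standing assumption: $\mathbb{P}(Y_i=0)=0$ for all $i$. For $\Gamma\ge1$, the sensitivity null $H_0(\Gamma)$ asserts: $R_{Tij}=R_{Cij}$ for all $i,j$; and conditional on $\mathcal{F}$, assignments are independent across pairs and for every $i$, $$\frac1\Gamma\le \frac{\mathbb{P}(Z_{i1}=1\mid\mathcal{F})/\mathbb{P}(Z_{i1}=0\mid\mathcal{F})}{\mathbb{P}(Z_{i2}=1\mid\mathcal{F})/\mathbb{P}(Z_{i2}=0\mid\mathcal{F})}\le\Gamma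 .$$ (Under $H_0(\Gamma)$, $Y_i=\pm|R_{Ci1}-R_{Ci2}|$ and $1/(1+\Gamma)\le\mathbb{P}(Y_i>0\mid\mathcal{F})\le\Gamma/(1+\Gamma)$.) Let $Y_{(1)},\dots,Y_{(n)}$ be the $Y_i$ ordered so that $|Y_{(1)}|\le\dots\le|Y_{(n)}|$. Set $c_i=\varphi(i/(n+1))$. Define $T_n(x)=0$ for $x<1/(n+1)$ and, for $x\ge 1/(n+1)$, $T_n(x)=\sum_{i=\lceil (1-x)(n+1)\rceil}^{n} c_i\,\mathbf{1}\{Y_{(i)}>0\}$. *)

(* Defs.v *)
From HB Require Import structures.
From mathcomp Require Import all_boot all_order all_algebra fingroup perm.
From mathcomp Require Import boolp reals.
Set Implicit Arguments. Unset Strict Implicit. Unset Printing Implicit Defensive.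
Import Order.TTheory GRing.Theory Num.Theory.
Local Open Scope ring_scope.

(* Conditionally on F, under H0(Gamma), Y_i = +/- d i with d i = |R_Ci1 - R_Ci2|.
   A sign configuration s : {ffun 'I_n -> bool} records s i = (Y_i > 0).
   sigma : {perm 'I_n} sorts the pairs so that |Y_(1)| <= ... <= |Y_(n)|:
   Y_(k+1) (1-indexed rank) is Y_(sigma k) (0-indexed). *)

(* c_k = phi (k / (n+1)) for the 1-indexed rank k; here k : 'I_n is rank k.+1 *)
Definition score_c (R : realType) (phi : R -> R) (n : nat) (k : 'I_n) : R :=
  phi ((k.+1)%:R / (n.+1)%:R).

Definition Tn (R : realType) (phi : R -> R) (n : nat) (sigma : {perm 'I_n})
    (s : {ffun 'I_n -> bool}) (x : R) : R :=
  if x < 1 / (n.+1)%:R then 0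
  else \sum_(k < n | Num.ceil ((1 - x) * (n.+1)%:R) <= (k.+1)%:Z)
         (if s (sigma k) then score_c phi k else 0).

Definition rejects (R : realType) (phi f : R -> R) (n : nat) (sigma : {perm 'I_n})
    (s : {ffun 'I_n -> bool}) : Prop :=
  exists x : R, 0 < x < 1 /\ f x <= Tn phi sigma s x.

Definition sign_prob (R : realType) (n : nat) (p : 'I_n -> R)
    (s : {ffun 'I_n -> bool}) : R :=
  \prod_(i < n) (if s i then p i else 1 - p i).

Definition rej_prob (R : realType) (phi f : R -> R) (n : nat) (sigma : {perm 'I_n})
    (p : 'I_n -> R) : R :=
  \sum_(s : {ffun 'I_n -> bool} | `[< rejects phi f sigma s >]) sign_prob p s.

(* the distributions of the signs allowed by H0(Gamma), conditionally on F:
   independent across pairs with 1/(1+Gamma) <= P(Y_i>0|F) <= Gamma/(1+Gamma) *)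
Definition H0_sign_law (R : realType) (Gamma : R) (n : nat) (p : 'I_n -> R) : Prop :=
  forall i, 1 / (1 + Gamma) <= p i <= Gamma / (1 + Gamma).

(* Main.v *)
Require Import Defs.
From HB Require Import structures.
From mathcomp Require Import all_boot all_order all_algebra fingroup perm.
From mathcomp Require Import boolp reals.
From mathcomp Require Import lra.
Import Order.TTheory GRing.Theory Num.Theory.
Local Open Scope ring_scope.
Set Implicit Arguments. Unset Strict Implicit.

Definition SP (R : realType) (n : nat) (P : pred {ffun 'I_n -> bool}) (p : 'I_n -> R) :=
  \sum_(s | P s) sign_prob p s.

Definition tog (n : nat) (i : 'I_n) (s : {ffun 'I_n -> bool}) : {ffun 'I_n -> bool} :=
  [ffun j => if j == i then ~~ s j else s j].

Lemma togK n (i : 'I_n) : involutive (tog i).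
Proof.
move=> s; apply/ffunP => j; rewrite !ffunE.
by case: eqP => // ->; rewrite negbK.
Qed.

Lemma SP_ext (R : realType) n P (p q : 'I_n -> R) :
  (forall j, p j = q j) -> SP P p = SP P q.
Proof.
move=> H; apply: eq_bigr => s _; apply: eq_bigr => j _; by rewrite H.
Qed.

Lemma SP_step (R : realType) n (P : pred {ffun 'I_n -> bool})
  (Pmono : forall s s' : {ffun 'I_n -> bool}, P s -> (forall j, s j ==> s' j) -> P s')
  (p p' : 'I_n -> R) (i : 'I_n) :
  (forall j, j != i -> p j = p' j) -> p i <= p' i ->
  (forall j, 0 <= p j <= 1) ->
  SP P p <= SP P p'.
Proof.
move=> hpp hi h01.
rewrite /SP !(big_mkcond P) !(bigID (fun s : {ffun 'I_n -> bool} => s i) predT) /=.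
have E : forall (F : {ffun 'I_n -> bool} -> R),
    \sum_(s : {ffun 'I_n -> bool} | ~~ s i) F s = \sum_(s : {ffun 'I_n -> bool} | s i) F (tog i s).
  move=> F; rewrite (reindex_inj (can_inj (togK i))) /=.
  by apply: eq_bigl => s; rewrite /tog ffunE eqxx negbK.
rewrite !E -!big_split /=; apply: ler_sum => s si.
set W := fun (q : 'I_n -> R) (s : {ffun 'I_n -> bool}) =>
  \prod_(j < n | j != i) (if s j then q j else 1 - q j).
have D : forall q s, sign_prob q s = (if s i then q i else 1 - q i) * W q s.
  by move=> q t; rewrite /sign_prob (bigD1 i) //.
have Wt : forall q, W q (tog i s) = W q s.
  move=> q; apply: eq_bigr => j hj; by rewrite /tog ffunE (negbTE hj).
have Wpp : W p s = W p' s.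
  apply: eq_bigr => j hj; by rewrite hpp.
have W0 : 0 <= W p s.
  apply: prodr_ge0 => j _; case: (s j); move: (h01 j) => /andP[a b]; lra.
have ti : tog i s i = false by rewrite /tog ffunE eqxx si.
rewrite !D !Wt ti si -Wpp.
have mono : P (tog i s) -> P s.
  move=> H; apply: Pmono H _ => j; rewrite /tog ffunE.
  by case: eqP => [->|_]; rewrite ?si ?implybT ?implybb.
case: (P s) mono; case: (P (tog i s)) => //= mono.
- nra.
- nra.
- by move: (mono isT).
Qed.

Lemma SP_mono (R : realType) n (P : pred {ffun 'I_n -> bool})
  (Pmono : forall s s' : {ffun 'I_n -> bool}, P s -> (forall j, s j ==> s' j) -> P s')
  (p q : 'I_n -> R) :
  (forall j, 0 <= p j <= 1) -> (forall j, 0 <= q j <= 1) ->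
  (forall j, p j <= q j) -> SP P p <= SP P q.
Proof.
move=> hp hq hpq.
pose r k := fun j : 'I_n => if (j < k)%N then q j else p j.
have r01 : forall k j, 0 <= r k j <= 1 by move=> k j; rewrite /r; case: ifP.
have H : forall k, SP P p <= SP P (r k).
  elim=> [|k IH].
    by rewrite (@SP_ext _ _ _ p (r 0%N)) // => j; rewrite /r.
  apply: (le_trans IH).
  case: (ltnP k n) => kn.
    apply: (@SP_step _ _ _ Pmono _ _ (Ordinal kn)) => //.
    - move=> j hj; rewrite /r ltnS [(j <= k)%N]leq_eqVlt; case: eqP => //= e.
      by move: hj; rewrite -(inj_eq val_inj) /= e eqxx.
    - by rewrite /r /= ltnn leqnn.
  rewrite (@SP_ext _ _ _ (r k) (r k.+1)) // => j; rewrite /r.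
  have a : (j < k)%N by apply: leq_trans (ltn_ord j) kn.
  by rewrite a ltnS ltnW.
rewrite (@SP_ext _ _ _ q (r n)); first exact: H.
by move=> j; rewrite /r ltn_ord.
Qed.

Theorem proposition1 (R : realType) (n : nat) (Gamma : R) (phi f : R -> R)
    (d : 'I_n -> R) (sigma : {perm 'I_n}) :
  (1 <= n)%N -> 1 <= Gamma ->
  (forall x, 0 < x < 1 -> 0 <= phi x) ->
  (forall x, 0 < x < 1 -> 0 < f x) ->
  (forall i, 0 < d i) ->
  (forall k l : 'I_n, (k <= l)%N -> d (sigma k) <= d (sigma l)) ->
  H0_sign_law Gamma (fun _ : 'I_n => Gamma / (1 + Gamma)) /\
  forall p : 'I_n -> R, H0_sign_law Gamma p ->
    rej_prob phi f sigma p <= rej_prob phi f sigma (fun _ : 'I_n => Gamma / (1 + Gamma)).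
Proof.
move=> n1 G1 phi0 f0 d0 dmono.
have G0 : 0 < 1 + Gamma by lra.
have lo : 1 / (1 + Gamma) <= Gamma / (1 + Gamma).
  by apply: ler_wpM2r; [rewrite invr_ge0 ltW|].
have lo0 : 0 <= 1 / (1 + Gamma) by apply: divr_ge0; lra.
have hi1 : Gamma / (1 + Gamma) <= 1 by rewrite ler_pdivrMr //; lra.
split; first by move=> i; rewrite lo lexx.
move=> p hp.
have c0 : forall k : 'I_n, 0 <= score_c phi k.
  move=> k; apply: phi0; apply/andP; split.
    by apply: divr_gt0; rewrite ltr0n.
  by rewrite ltr_pdivrMr ?ltr0n // mul1r ltr_nat ltnS ltn_ord.
apply: (@SP_mono R n (fun s => `[< rejects phi f sigma s >])).
- move=> s s' /asboolP [x [hx hf]] hs; apply/asboolP; exists x; split => //.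
  apply: (le_trans hf); rewrite /Tn; case: ifP => // _.
  apply: ler_sum => k _; move: (hs (sigma k)).
  case: (s (sigma k)); case: (s' (sigma k)) => //= _; exact: c0.
- move=> j; move: (hp j) => /andP[a b]; apply/andP; split; [exact: le_trans a|exact: le_trans hi1].
- by move=> j; rewrite (le_trans lo0 lo) hi1.
- by move=> j; case/andP: (hp j).
Qed.
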